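(* Let $n$ be odd and consider $n$ particles on $\mathbb{M}^2$ lying on one geodesic (the real axis), with masses $m_1>0$, $m_2=m_3=1$, $m_4=m_5>0$, $\dots$, $m_{n-1}=m_n>0$ and initial positions $z_1=0$, $z_{2k}=-z_{2k+1}$ real for $k=1,\dots,(n-1)/2$, with $0<z_2<z_4<\dots<z_{n-1}$. Then there do not exist relative equilibria if any of the following holds: (1) all $n$ particles are inside the geodesic circle $|z|=1$ (i.e. $z_{n-1}<1$); (2) all particles except bodies $1,2,3$ are outside the geodesic circle while bodies $2,3$ are inside (i.e. $z_2<1<z_4$), and $z_{n-1}<1/z_2$; (3) all particles except bodies $n-1$ and $n$ are inside the geodesic circle (i.e. $z_{n-3}<1<z_{n-1}$), and $z_{n-1}<1/z_{n-3}$.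
   Context: $\mathbb{M}^2$ is the complex plane with metric $ds^2=\frac{4\,dz\,d\bar z}{(1+|z|^2)^2}$; the distance satisfies $\cos d(z_k,z_j)=\frac{2(z_k\bar z_j+z_j\bar z_k)+(|z_k|^2-1)(|z_j|^2-1)}{(|z_k|^2+1)(|z_j|^2+1)}$. The curved $n$-body problem has kinetic energy $T=\frac12\sum_i m_i\frac{4|\dot z_i|^2}{(1+|z_i|^2)^2}$ and force function $U=\sum_{i<j}m_im_j\cot d(z_i,z_j)$. A relative equilibrium is a solution invariant under a one-parameter subgroup of isometries; it suffices to consider solutions $w(t)=e^{it}z$. Following earlier work, positions $z_1,\dots,z_n$ ($r_l=|z_l|$) form a relative equilibrium iff for each $i$: $\frac{(1-r_i^2)z_i}{4(1+r_i^2)^4}=-\sum_{j\ne i}\frac{m_j(r_j^2+1)^2(1+z_i\bar z_j)(z_j-z_i)}{T_{ij}^{3/2}}$, with $T_{ij}=(r_i^2+1)^2(r_j^2+1)^2-[2(z_i\bar z_j+z_j\bar z_i)+(r_i^2-1)(r_j^2-1)]^2$. Singular configurations are excluded. *)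

(* Defs.v *)
From Stdlib Require Import Reals Lra.
From Coquelicot Require Import Coquelicot.
Open Scope R_scope.

Definition r2 (z : C) : R := (Cmod z) ^ 2.

(* T_ij = (r_i^2+1)^2 (r_j^2+1)^2 - [2(z_i conj z_j + z_j conj z_i) + (r_i^2-1)(r_j^2-1)]^2 ;
   note z_i conj z_j + z_j conj z_i = 2 Re(z_i conj z_j) is real. *)
Definition Tij (zi zj : C) : R :=
  (r2 zi + 1) ^ 2 * (r2 zj + 1) ^ 2
  - (2 * Re (zi * Cconj zj + zj * Cconj zi)%C + (r2 zi - 1) * (r2 zj - 1)) ^ 2.

Definition T32 (t : R) : R := t * sqrt t.

(* Bodies are indexed 1..n; masses m : nat -> R, positions z : nat -> C. *)

(* Singular configurations: collisions or antipodal pairs, i.e. T_ij = 0 for some i <> j. *)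
Definition nonsingular (n : nat) (z : nat -> C) : Prop :=
  forall i j, (1 <= i <= n)%nat -> (1 <= j <= n)%nat -> i <> j -> Tij (z i) (z j) <> 0.

Definition RE_term (n : nat) (m : nat -> R) (z : nat -> C) (i j : nat) : C :=
  if (andb (Nat.leb 1 j) (Nat.leb j n) && negb (Nat.eqb j i))%bool then
    ((RtoC (m j * (r2 (z j) + 1) ^ 2) * (1 + z i * Cconj (z j)) * (z j - z i))
      / RtoC (T32 (Tij (z i) (z j))))%C
  else RtoC 0.

Definition RE_eq (n : nat) (m : nat -> R) (z : nat -> C) (i : nat) : Prop :=
  (RtoC (1 - r2 (z i)) * z i / RtoC (4 * (1 + r2 (z i)) ^ 4))%C
  = (- sum_n (RE_term n m z i) n)%C.

Definition relative_equilibrium (n : nat) (m : nat -> R) (z : nat -> C) : Prop :=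
  nonsingular n z /\ forall i, (1 <= i <= n)%nat -> RE_eq n m z i.

(* Main.v *)
Require Import Defs.
From Stdlib Require Import Reals Lra Lia Psatz.
From Coquelicot Require Import Coquelicot.
Open Scope R_scope.

Lemma r2_R (y : R) : r2 (RtoC y) = y ^ 2.
Proof. unfold r2. rewrite Cmod_R. simpl. rewrite Rmult_1_r, <- Rabs_mult, Rabs_pos_eq by nra. ring. Qed.

Lemma Tij_R (c y : R) : Tij (RtoC c) (RtoC y) = 4 * ((1 + c*y) * (c - y))^2.
Proof. unfold Tij. rewrite !r2_R. unfold Cconj, Cmult, Cplus, RtoC, Re; simpl. ring. Qed.

Lemma T32_R (c y : R) : T32 (Tij (RtoC c) (RtoC y)) =
  8 * ((1 + c*y) * (c - y))^2 * Rabs ((1 + c*y) * (c - y)).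
Proof.
  rewrite Tij_R. unfold T32.
  replace (4 * ((1 + c * y) * (c - y)) ^ 2) with (Rsqr (2 * ((1 + c*y) * (c - y)))) by (unfold Rsqr; ring).
  rewrite sqrt_Rsqr_abs, Rabs_mult, (Rabs_pos_eq 2) by lra. unfold Rsqr. ring.
Qed.

Definition Wf (M c y : R) : R :=
  - (M * (r2 (RtoC y) + 1)^2 * (1 + c*y) * (y - c) / T32 (Tij (RtoC c) (RtoC y))).

Lemma Wf_pos M c y : 0 < (1 + c*y) * (c - y) ->
  Wf M c y = M * (1 + y^2)^2 / (8 * ((1 + c*y) * (c - y))^2).
Proof.
  intros H. unfold Wf. rewrite T32_R, r2_R, Rabs_pos_eq by lra.
  field. split; intro E; rewrite E in H; lra.
Qed.

Lemma Wf_neg M c y : (1 + c*y) * (c - y) < 0 ->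
  Wf M c y = - (M * (1 + y^2)^2 / (8 * ((1 + c*y) * (c - y))^2)).
Proof.
  intros H. unfold Wf. rewrite T32_R, r2_R, Rabs_left by lra.
  field. split; intro E; rewrite E in H; lra.
Qed.

Lemma Re_term (M c y : R) : (1 + c*y) * (c - y) <> 0 ->
  Re ((RtoC M * (1 + RtoC c * Cconj (RtoC y)) * (RtoC y - RtoC c)) / RtoC (T32 (Tij (RtoC c) (RtoC y))))%C
  = M * (1 + c*y) * (y - c) / T32 (Tij (RtoC c) (RtoC y)).
Proof.
  intros H. assert (Ht : T32 (Tij (RtoC c) (RtoC y)) <> 0).
  { rewrite T32_R. apply Rmult_integral_contrapositive. split.
    - apply Rmult_integral_contrapositive. split. lra. apply pow_nonzero. auto.
    - apply Rabs_no_R0. auto. }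
  set (t := T32 _) in *. clearbody t.
  unfold Cdiv, Cinv, Cmult, Cplus, Cminus, Copp, Cconj, RtoC, Re; simpl. field. auto.
Qed.

Lemma Re_sum (f : nat -> C) N : Re (sum_n f N) = sum_f_R0 (fun j => Re (f j)) N.
Proof.
  induction N. rewrite sum_O. reflexivity.
  rewrite sum_Sn. simpl. rewrite <- IHN. reflexivity.
Qed.

Lemma sum_pairs (w : nat -> R) q :
  sum_f_R0 w (2*q+1) = sum_f_R0 (fun k => w (2*k)%nat + w (2*k+1)%nat) q.
Proof.
  induction q. simpl. ring.
  replace (2 * S q + 1)%nat with (S (S (2*q+1))) by lia.
  rewrite !tech5, IHq.
  replace (S (2*q+1)) with (2 * S q)%nat by lia.
  replace (S (2 * S q)) with (2 * S q + 1)%nat by lia. ring.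
Qed.

Lemma sum_ge1 (g : nat -> R) p : (1 <= p)%nat -> (forall k, (k <= p)%nat -> 0 <= g k) ->
  g 1%nat <= sum_f_R0 g p.
Proof.
  induction p; intros Hp Hg. lia.
  destruct (Nat.eq_dec p 0). subst. simpl. pose proof (Hg 0%nat ltac:(lia)). lra.
  simpl. pose proof (IHp ltac:(lia) ltac:(intros; apply Hg; lia)).
  pose proof (Hg (S p) ltac:(lia)). lra.
Qed.

Lemma sum_le1 (g : nat -> R) p : (1 <= p)%nat -> (forall k, (k <= p)%nat -> g k <= 0) ->
  sum_f_R0 g p <= g 1%nat.
Proof.
  induction p; intros Hp Hg. lia.
  destruct (Nat.eq_dec p 0). subst. simpl. pose proof (Hg 0%nat ltac:(lia)). lra.
  simpl. pose proof (IHp ltac:(lia) ltac:(intros; apply Hg; lia)).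
  pose proof (Hg (S p) ltac:(lia)). lra.
Qed.

Lemma Wf_nonneg M c y : 0 <= M -> 0 < (1 + c*y) * (c - y) -> 0 <= Wf M c y.
Proof.
  intros HM H. rewrite Wf_pos by auto. apply Rdiv_le_0_compat.
  apply Rmult_le_pos; [auto| apply pow_le; nra]. nra.
Qed.

Lemma pair_nonneg M c x : 0 <= M -> 0 < c < 1 -> 0 < x ->
  (x < c \/ (1 <= x /\ c * x < 1)) -> 0 <= Wf M c x + Wf M c (-x).
Proof.
  intros HM Hc Hx [H|[H1 H2]].
  - assert (0 < (1 + c*x) * (c - x)) by (apply Rmult_lt_0_compat; nra).
    assert (0 < (1 + c*(-x)) * (c - (-x))) by (apply Rmult_lt_0_compat; nra).
    assert (0 <= Wf M c x) by (apply Wf_nonneg; auto).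
    assert (0 <= Wf M c (-x)) by (apply Wf_nonneg; auto). lra.
  - assert ((1 + c*x) * (c - x) < 0).
    { assert (0 < 1 + c*x) by nra. assert (c - x < 0) by lra.
      apply Rmult_pos_neg; lra. }
    assert (0 < (1 + c*(-x)) * (c - (-x))) by (apply Rmult_lt_0_compat; nra).
    rewrite Wf_neg by auto. rewrite Wf_pos by auto.
    replace ((- x)^2) with (x^2) by ring.
    set (N := M * (1 + x^2)^2).
    assert (0 <= N) by (unfold N; apply Rmult_le_pos; [auto| apply pow_le; nra]).
    set (A1 := (1 + c*x) * (c - x)). set (A2 := (1 + c * - x) * (c - - x)).
    assert (0 < A2) by (unfold A2; auto).
    assert (E : - A1 - A2 = 2 * c * (x^2 - 1)) by (unfold A1, A2; ring).
    assert (0 <= x^2 - 1) by nra.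
    assert (0 <= 2 * c * (x^2 - 1)) by (apply Rmult_le_pos; lra).
    assert (A2 <= - A1) by lra.
    assert (N / (8 * A1^2) <= N / (8 * A2^2)).
    { unfold Rdiv. apply Rmult_le_compat_l; auto. apply Rinv_le_contravar; nra. }
    lra.
Qed.

Lemma bound c b : 0 < b <= c -> c < 1 ->
  (1 - c^2) * c / (4 * (1 + c^2)^4) < Wf 1 c (-b).
Proof.
  intros Hb Hc. rewrite Wf_pos by nra.
  set (A := (1 + c * - b) * (c - - b)).
  assert (0 < A) by (unfold A; nra).
  assert (A <= 2 * c) by (unfold A; nra).
  assert (H3 : 0 <= c^3 - c + /2).
  { replace (c^3 - c + /2) with ((c - 3/5)^2 * (c + 6/5) + 2/25 * c + 17/250) by field. assert (0 <= (c - 3/5)^2) by apply pow2_ge_0. assert (0 <= (c - 3/5)^2 * (c + 6/5)) by (apply Rmult_le_pos; lra). lra. }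
  assert (Hq : 1 + 4 * c^2 <= (1 + c^2)^4) by nra.
  assert (Hq2 : 1 <= (1 + (-b)^2)^2) by nra.
  assert (HA2 : A^2 <= 4 * c^2) by nra.
  assert (H5 : (1 - c^2) * c * A^2 <= (1 - c^2) * c * (4 * c^2)) by (apply Rmult_le_compat_l; nra).
  assert (H7 : 0 <= c^2 * (c^3 - c + /2)) by (apply Rmult_le_pos; nra).
  assert (H6 : 2 * ((1 - c^2) * c) * A^2 < (1 + c^2)^4).
  { assert (2 * ((1 - c^2) * c) * A^2 <= 2 * ((1 - c^2) * c * (4 * c^2))) by lra.
    assert (2 * ((1 - c^2) * c * (4 * c^2)) = 4 * c^2 - 8 * (c^2 * (c^3 - c + /2))) by field.
    lra. }
  set (Q := (1 + c^2)^4) in *. set (P := (1 - c^2) * c) in *.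
  assert (0 < Q) by (pose proof (pow2_ge_0 c); lra).
  assert (0 < A^2) by nra.
  apply Rlt_le_trans with (1 / (8 * A^2)).
  - apply (Rmult_lt_reg_r (4 * Q * (8 * A^2))). nra.
    replace (P / (4 * Q) * (4 * Q * (8 * A ^ 2))) with (8 * A^2 * P) by (field; lra).
    replace (1 / (8 * A ^ 2) * (4 * Q * (8 * A ^ 2))) with (4 * Q) by (field; lra).
    nra.
  - unfold Rdiv. apply Rmult_le_compat_r. left. apply Rinv_0_lt_compat. lra. lra.
Qed.

Lemma C_real (w : C) : Im w = 0 -> w = RtoC (Re w).
Proof. destruct w as [a b]. simpl. intros ->. reflexivity. Qed.

Lemma Copp_R (x : R) : (- RtoC x)%C = RtoC (- x).
Proof. unfold Copp, RtoC. simpl. f_equal. ring. Qed.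

Lemma w_eq n m z i j c y : (1 <= j <= n)%nat -> j <> i -> z i = RtoC c -> z j = RtoC y ->
  (1 + c*y) * (c - y) <> 0 -> Re (RE_term n m z i j) = - Wf (m j) c y.
Proof.
  intros Hj Hji Hi Hy HA. unfold RE_term.
  assert (E : (Nat.leb 1 j && Nat.leb j n && negb (Nat.eqb j i))%bool = true).
  { apply andb_true_intro; split. apply andb_true_intro; split; apply Nat.leb_le; lia.
    rewrite Bool.negb_true_iff; apply Nat.eqb_neq; auto. }
  rewrite E, Hi, Hy, Re_term by auto. unfold Wf. ring.
Qed.

Lemma w_self n m z i : Re (RE_term n m z i i) = 0.
Proof. unfold RE_term. rewrite Nat.eqb_refl, Bool.andb_false_r. reflexivity. Qed.

Lemma w_zero n m z i : Re (RE_term n m z i 0) = 0.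
Proof. unfold RE_term. reflexivity. Qed.

Lemma Re_lhs c : Re (RtoC (1 - r2 (RtoC c)) * RtoC c / RtoC (4 * (1 + r2 (RtoC c)) ^ 4))%C
  = (1 - c^2) * c / (4 * (1 + c^2)^4).
Proof.
  rewrite r2_R. assert (0 < 4 * (1 + c^2)^4) by (apply Rmult_lt_0_compat; [lra| apply pow_lt; nra]).
  set (t := 4 * (1 + c^2)^4) in *. clearbody t.
  unfold Cdiv, Cinv, Cmult, RtoC, Re; simpl. field. lra.
Qed.

Lemma Re_opp (x : C) : Re (- x)%C = - Re x.
Proof. reflexivity. Qed.

Lemma key p m z K :
 (1 <= p)%nat -> m 1%nat > 0 ->
 (forall k, (1 <= k <= p)%nat -> m (2*k)%nat = m (2*k+1)%nat /\ m (2*k)%nat > 0) ->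
 m 3%nat = 1 ->
 z 1%nat = RtoC 0 ->
 (forall k, (1 <= k <= p)%nat -> Im (z (2*k)%nat) = 0 /\ z (2*k+1)%nat = (- z (2*k)%nat)%C) ->
 (1 <= K <= p)%nat ->
 0 < Re (z (2*K)%nat) < 1 ->
 (forall k, (1 <= k <= p)%nat -> 0 < Re (z (2*k)%nat)) ->
 (forall k, (1 <= k <= p)%nat -> k <> K -> Re (z (2*k)%nat) < Re (z (2*K)%nat)
     \/ (1 <= Re (z (2*k)%nat) /\ Re (z (2*K)%nat) * Re (z (2*k)%nat) < 1)) ->
 Re (z 2%nat) <= Re (z (2*K)%nat) ->
 ~ RE_eq (2*p+1) m z (2*K).
Proof.
  intros Hp Hm1 Hm Hm3 Hz1 Hz HK Hc Hpos Hcase H2 Heq.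
  set (c := Re (z (2*K)%nat)) in *.
  assert (Hzr : forall k, (1 <= k <= p)%nat ->
     z (2*k)%nat = RtoC (Re (z (2*k)%nat)) /\ z (2*k+1)%nat = RtoC (- Re (z (2*k)%nat))).
  { intros k Hk. destruct (Hz k Hk) as [Hi Ho]. rewrite Ho. split. apply C_real; auto.
    rewrite (C_real _ Hi). simpl Re. apply Copp_R. }
  assert (HzK : z (2*K)%nat = RtoC c) by (apply Hzr; auto).
  unfold RE_eq in Heq. apply (f_equal Re) in Heq.
  rewrite HzK, Re_lhs in Heq. rewrite Re_opp, Re_sum, sum_pairs in Heq.
  set (w := fun j => Re (RE_term (2*p+1) m z (2*K) j)) in Heq.
  set (L := (1 - c ^ 2) * c / (4 * (1 + c ^ 2) ^ 4)) in Heq.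
  set (g := fun k => w (2*k)%nat + w (2*k+1)%nat) in Heq.
  assert (Hg : forall k, (k <= p)%nat -> g k <= 0).
  { intros k Hk. unfold g, w. destruct (Nat.eq_dec k 0) as [->|Hk0].
    - change (2*0)%nat with 0%nat. change (0+1)%nat with 1%nat. rewrite w_zero.
      assert (HA : (1 + c*0) * (c - 0) <> 0) by (replace ((1 + c*0) * (c - 0)) with c by ring; lra).
      rewrite (w_eq (2*p+1) m z (2*K) 1 c 0 ltac:(lia) ltac:(lia) HzK Hz1 HA).
      assert (0 <= Wf (m 1%nat) c 0). { apply Wf_nonneg. lra. replace ((1 + c*0) * (c - 0)) with c by ring; lra. }
      lra.
    - destruct (Hzr k ltac:(lia)) as [Ha Hb]. destruct (Hm k ltac:(lia)) as [Hme Hmp].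
      set (x := Re (z (2*k)%nat)) in *.
      destruct (Nat.eq_dec k K) as [->|HkK].
      + rewrite w_self.
        assert (HA : 0 < (1 + c * - c) * (c - - c)) by (apply Rmult_lt_0_compat; nra).
        rewrite (w_eq (2*p+1) m z (2*K) (2*K+1) c (-c) ltac:(lia) ltac:(lia) HzK Hb ltac:(lra)).
        assert (0 <= Wf (m (2 * K + 1)%nat) c (- c)) by (apply Wf_nonneg; lra). lra.
      + pose proof (Hpos k ltac:(lia)) as Hx. fold x in Hx.
        pose proof (Hcase k ltac:(lia) HkK) as Hcs. fold x in Hcs.
        assert (0 < (1 + c * - x) * (c - - x)) by (apply Rmult_lt_0_compat; destruct Hcs; nra).
        assert ((1 + c * x) * (c - x) <> 0).
        { destruct Hcs as [Hl|[Hl1 Hl2]].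
          - assert (0 < (1 + c * x) * (c - x)) by (apply Rmult_lt_0_compat; nra). lra.
          - assert (0 < 1 + c*x) by nra. assert (c - x < 0) by lra.
            assert ((1 + c * x) * (c - x) < 0) by (apply Rmult_pos_neg; lra). lra. }
        rewrite (w_eq (2*p+1) m z (2*K) (2*k) c x ltac:(lia) ltac:(lia) HzK Ha ltac:(lra)).
        rewrite (w_eq (2*p+1) m z (2*K) (2*k+1) c (-x) ltac:(lia) ltac:(lia) HzK Hb ltac:(lra)).
        rewrite <- Hme.
        pose proof (pair_nonneg (m (2*k)%nat) c x ltac:(lra) Hc Hx Hcs). lra. }
  assert (Hg1 : g 1%nat < - L).
  { unfold g, w. destruct (Hzr 1%nat ltac:(lia)) as [Ha Hb]. change (2*1+1)%nat with 3%nat in *. change (2*1)%nat with 2%nat in *.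
    set (b := Re (z 2%nat)) in *.
    pose proof (Hpos 1%nat ltac:(lia)) as Hb0. change (2*1)%nat with 2%nat in Hb0. fold b in Hb0.
    assert (0 < (1 + c * - b) * (c - - b)) by (apply Rmult_lt_0_compat; nra).
    rewrite (w_eq (2*p+1) m z (2*K) 3 c (-b) ltac:(lia) ltac:(lia) HzK Hb ltac:(lra)).
    rewrite Hm3. pose proof (bound c b ltac:(lra) ltac:(lra)). fold L in H0.
    assert (Re (RE_term (2 * p + 1) m z (2 * K) 2) <= 0).
    { destruct (Nat.eq_dec K 1) as [->|HK1].
      - change (2*1)%nat with 2%nat. rewrite w_self. lra.
      - pose proof (Hcase 1%nat ltac:(lia) ltac:(lia)) as Hcs. change (2*1)%nat with 2%nat in Hcs. fold b in Hcs.
        assert (b < c) by (destruct Hcs; lra).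
        assert (0 < (1 + c * b) * (c - b)) by (apply Rmult_lt_0_compat; nra).
        rewrite (w_eq (2*p+1) m z (2*K) 2 c b ltac:(lia) ltac:(lia) HzK Ha ltac:(lra)).
        assert (0 <= Wf (m 2%nat) c b) by (apply Wf_nonneg; [destruct (Hm 1%nat ltac:(lia)); simpl in *; lra| lra]).
        lra. }
    lra. }
  pose proof (sum_le1 g p Hp Hg). unfold g, w in *. cbv beta in *. lra.
Qed.

Lemma mono (x : nat -> R) p : (forall k, (1 <= k < p)%nat -> x k < x (S k)) ->
  forall j k, (1 <= j)%nat -> (j < k)%nat -> (k <= p)%nat -> x j < x k.
Proof.
  intros H j k Hj. induction k; intros Hjk Hk. lia.
  destruct (Nat.eq_dec j k) as [->|Hne]. apply H; lia.
  pose proof (IHk ltac:(lia) ltac:(lia)). pose proof (H k ltac:(lia)). lra.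
Qed.

Theorem proposition2 (p : nat) (m : nat -> R) (z : nat -> C) :
  (1 <= p)%nat ->
  m 1%nat > 0 ->
  m 2%nat = 1 -> m 3%nat = 1 ->
  (forall k, (2 <= k <= p)%nat -> m (2 * k)%nat = m (2 * k + 1)%nat /\ m (2 * k)%nat > 0) ->
  z 1%nat = RtoC 0 ->
  (forall k, (1 <= k <= p)%nat ->
     Im (z (2 * k)%nat) = 0 /\ z (2 * k + 1)%nat = (- z (2 * k)%nat)%C) ->
  0 < Re (z 2%nat) ->
  (forall k, (1 <= k < p)%nat -> Re (z (2 * k)%nat) < Re (z (2 * k + 2)%nat)) ->
  ( (* (1) all particles inside the circle |z| = 1 *)
    Re (z (2 * p)%nat) < 1
    \/
    (* (2) bodies 2,3 inside, bodies 4..n outside, z_{n-1} < 1/z_2 *)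
    ((2 <= p)%nat /\ Re (z 2%nat) < 1 < Re (z 4%nat)
       /\ Re (z (2 * p)%nat) < / Re (z 2%nat))
    \/
    (* (3) only bodies n-1, n outside, z_{n-1} < 1/z_{n-3} *)
    ((2 <= p)%nat /\ Re (z (2 * p - 2)%nat) < 1 < Re (z (2 * p)%nat)
       /\ Re (z (2 * p)%nat) < / Re (z (2 * p - 2)%nat)) ) ->
  ~ relative_equilibrium (2 * p + 1) m z.
Proof.
  intros Hp Hm1 Hm2 Hm3 Hm Hz1 Hz Hx1 Hinc Hcases [_ Heq].
  set (x := fun k => Re (z (2*k)%nat)).
  assert (Hmono : forall j k, (1 <= j)%nat -> (j < k)%nat -> (k <= p)%nat -> x j < x k).
  { apply mono. intros k Hk. unfold x. replace (2 * S k)%nat with (2*k+2)%nat by lia. apply Hinc; lia. }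
  assert (Hle : forall j k, (1 <= j)%nat -> (j <= k)%nat -> (k <= p)%nat -> x j <= x k).
  { intros j k Hj Hjk Hk. destruct (Nat.eq_dec j k) as [->|]. lra. left; apply Hmono; lia. }
  assert (Hm' : forall k, (1 <= k <= p)%nat -> m (2*k)%nat = m (2*k+1)%nat /\ m (2*k)%nat > 0).
  { intros k Hk. destruct (Nat.eq_dec k 1) as [->|]. simpl. lra. apply Hm; lia. }
  assert (Hpos : forall k, (1 <= k <= p)%nat -> 0 < x k).
  { intros k Hk. pose proof (Hle 1%nat k ltac:(lia) ltac:(lia) ltac:(lia)). unfold x in *. simpl in *. lra. }
  assert (Hx1' : x 1%nat = Re (z 2%nat)) by reflexivity.
  destruct Hcases as [H1|[[Hp2 [[Hb Hc4] Hbp]]|[Hp2 [[Hc Hc1] Hcp]]]].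
  -
    apply (key p m z p Hp Hm1 Hm' Hm3 Hz1 Hz ltac:(lia)).
    + split. apply (Hpos p); lia. auto.
    + intros; apply (Hpos k); auto.
    + intros k Hk HkK. left. apply (Hmono k p); lia.
    + rewrite <- Hx1'. apply Hle; lia.
    + apply Heq; lia.
  -
    assert (Hb0 := Hpos 1%nat ltac:(lia)). rewrite Hx1' in Hb0.
    replace 2%nat with (2*1)%nat in Heq by reflexivity.
    apply (key p m z 1 Hp Hm1 Hm' Hm3 Hz1 Hz ltac:(lia)).
    + simpl. lra.
    + intros; apply (Hpos k); auto.
    + intros k Hk HkK. right. change (2*1)%nat with 2%nat.
      assert (x 2%nat <= x k) by (apply Hle; lia).
      assert (x k <= x p) by (apply Hle; lia).
      unfold x in *. change (2*2)%nat with 4%nat in *. split. lra.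
      assert (Re (z 2%nat) * Re (z (2*p)%nat) < Re (z 2%nat) * / Re (z 2%nat)).
      { apply Rmult_lt_compat_l; lra. }
      rewrite Rinv_r in H1 by lra.
      assert (Re (z 2%nat) * Re (z (2*k)%nat) <= Re (z 2%nat) * Re (z (2*p)%nat)).
      { apply Rmult_le_compat_l; lra. }
      lra.
    + simpl. lra.
    + apply Heq; lia.
  -
    replace (2*p-2)%nat with (2*(p-1))%nat in * by lia.
    assert (Hc0 := Hpos (p-1)%nat ltac:(lia)). unfold x in Hc0.
    apply (key p m z (p-1) Hp Hm1 Hm' Hm3 Hz1 Hz ltac:(lia)).
    + lra.
    + intros; apply (Hpos k); auto.
    + intros k Hk HkK. destruct (Nat.eq_dec k p) as [->|Hkp].
      * right. split. lra.
        assert (Re (z (2*(p-1))%nat) * Re (z (2*p)%nat) < Re (z (2*(p-1))%nat) * / Re (z (2*(p-1))%nat)).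
        { apply Rmult_lt_compat_l; lra. }
        rewrite Rinv_r in H by lra. lra.
      * left. apply (Hmono k (p-1)%nat); lia.
    + rewrite <- Hx1'. apply Hle; lia.
    + apply Heq; lia.
Qed.
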